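(* Let $n\ge0$ be an integer with $\chi_n>c^2$, and let $x_1$ be the minimal root of $\psi_n$ in $(1,\infty)$. Then $$x_1-\frac{\sqrt{\chi_n}}{c}>\frac{\pi}{2c}\qquad\text{and}\qquad\sqrt{\frac{x_1^2-1}{x_1^2-\chi_n/c^2}}<\frac{2}{\pi}\,c\Big(x_1-\frac{\sqrt{\chi_n}}{c}\Big).$$
   Context: For a real number $c>0$, let $\psi_0,\psi_1,\dots$ be the prolate spheroidal wave functions of band limit $c$: the real $L^2[-1,1]$-normalized eigenfunctions of $F_c[\varphi](x)=\int_{-1}^1\varphi(t)e^{icxt}\,dt$ with eigenvalues $\lambda_n$ ordered by $|\lambda_n|\ge|\lambda_{n+1}|$, extended to entire functions by $\lambda_n\psi_n(x)=\int_{-1}^1\psi_n(t)e^{icxt}\,dt$. $\chi_0<\chi_1<\dots$ are the positive numbers such that $\psi_n$ satisfies $(1-x^2)\psi''(x)-2x\psi'(x)+(\chi_n-c^2x^2)\psi(x)=0$ for all $x$. (Each $\psi_n$ has infinitely many roots in $(1,\infty)$.) *)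

(* Defs.v *)
From Stdlib Require Import Reals.
From Coquelicot Require Import Coquelicot.
Open Scope R_scope.

Definition fourier_kernel (c x t : R) : C := (cos (c * x * t), sin (c * x * t)).

Definition is_Fc_eigenpair (c : R) (phi : R -> R) (mu : C) : Prop :=
  forall x, -1 <= x <= 1 ->
    is_RInt (fun t => Cmult (RtoC (phi t)) (fourier_kernel c x t)) (-1) 1
            (Cmult mu (RtoC (phi x))).

(* (psi, lam) is the sequence of prolate spheroidal wave functions of band
   limit c with their eigenvalues:
   - each psi n is real, L^2[-1,1]-normalized, and the psi n are orthogonal;
   - lam n * psi n x = int_{-1}^1 psi n t e^{icxt} dt for ALL real x
     (eigen-equation on [-1,1] and the entire extension outside);
   - |lam n| >= |lam (n+1)|;
   - the sequence exhausts the (real) eigenfunctions of F_c: every real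
     eigenfunction with nonzero eigenvalue is a multiple of some psi n. *)
Definition is_PSWF_family (c : R) (psi : nat -> R -> R) (lam : nat -> C) : Prop :=
  (forall n, is_RInt (fun t => psi n t ^ 2) (-1) 1 1) /\
  (forall m n, m <> n -> is_RInt (fun t => psi m t * psi n t) (-1) 1 0) /\
  (forall n x,
     is_RInt (fun t => Cmult (RtoC (psi n t)) (fourier_kernel c x t)) (-1) 1
             (Cmult (lam n) (RtoC (psi n x)))) /\
  (forall n, Cmod (lam (S n)) <= Cmod (lam n)) /\
  (forall (phi : R -> R) (mu : C), mu <> RtoC 0 ->
     is_Fc_eigenpair c phi mu ->
     (exists x, -1 <= x <= 1 /\ phi x <> 0) ->
     exists n a, forall x, -1 <= x <= 1 -> phi x = a * psi n x).

Definition satisfies_prolate_ode (c chi : R) (f : R -> R) : Prop :=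
  forall x, ex_derive f x /\ ex_derive (Derive f) x /\
    (1 - x ^ 2) * Derive_n f 2 x - 2 * x * Derive f x + (chi - c ^ 2 * x ^ 2) * f x = 0.

(* Main.v *)
Require Import Defs.
From Stdlib Require Import Reals Lra Psatz.
From Coquelicot Require Import Coquelicot.
Open Scope R_scope.

Lemma dmul f g x df dg: is_derive f x df -> is_derive g x dg ->
  is_derive (fun t => f t * g t) x (df * g x + f x * dg).
Proof. intros. apply (is_derive_mult f g); auto. intros; apply Rmult_comm. Qed.
Lemma dminus f g x df dg: is_derive f x df -> is_derive g x dg ->
  is_derive (fun t => f t - g t) x (df - dg).
Proof. intros. apply (is_derive_minus f g); auto. Qed.
Lemma dval (f : R -> R) (x d d' : R) : is_derive f x d -> d = d' -> is_derive f x d'.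
Proof. intros; subst; auto. Qed.

Lemma mvt (f f' : R -> R) a b : a < b -> (forall x, is_derive f x (f' x)) ->
  exists c, f b - f a = f' c * (b - a) /\ a < c < b.
Proof. intros. apply MVT_cor2; auto. intros; apply is_derive_Reals; auto. Qed.

Lemma core (c chi x1 : R) (v v1 v2 : R -> R) : 0 < c -> chi > c^2 -> 1 < x1 -> v x1 = 0 ->
  (forall y, 1 < y < x1 -> 0 < v y) -> (forall x, is_derive v x (v1 x)) ->
  (forall x, is_derive v1 x (v2 x)) ->
  (forall x, (1 - x^2) * v2 x - 2 * x * v1 x + (chi - c^2 * x^2) * v x = 0) ->
  let x0 := sqrt chi / c in
  x0 < x1 /\ 0 <= v1 x0.
Proof.
  intros Hc Hchi Hx1 Hv1 Hpos Hd1 Hd2 Hode x0.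
  assert (Hx0 : 1 < x0).
  { unfold x0. apply Rmult_lt_reg_r with c; auto. unfold Rdiv; rewrite Rmult_assoc, Rinv_l, Rmult_1_r by lra.
    rewrite Rmult_1_l. rewrite <- (sqrt_pow2 c) by lra. apply sqrt_lt_1; nra. }
  assert (Hx0sq : c^2 * x0^2 = chi).
  { unfold x0. unfold Rdiv. rewrite Rpow_mult_distr, pow2_sqrt by nra. rewrite pow_inv. field. lra. }
  set (G := fun x => (x^2 - 1) * v1 x).
  set (G' := fun x => (chi - c^2 * x^2) * v x).
  assert (HG : forall x, is_derive G x (G' x)).
  { intro x. unfold G, G'. eapply dval. apply (dmul (fun t => t^2-1) v1 x (2*x) (v2 x)). 2: apply Hd2.
    auto_derive; auto; ring. specialize (Hode x). nra. }
  assert (HG0 : forall y, 1 < y -> y <= x0 -> y <= x1 -> 0 <= G y).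
  { intros y Hy1 Hy0 Hyx.
    destruct (mvt G G' 1 y Hy1 HG) as [e [He1 He2]].
    assert (G 1 = 0) by (unfold G; ring).
    assert (0 <= G' e). { unfold G'. apply Rmult_le_pos. 2: { left; apply Hpos; lra. }
      assert (c^2*e^2 < c^2 * x0^2) by (apply Rmult_lt_compat_l; [nra| nra]). lra. }
    nra. }
  assert (Hlt : x0 < x1).
  { destruct (Rlt_or_le x0 x1) as [h|h]; auto. exfalso.
    set (m := (1 + x1)/2).
    destruct (mvt v v1 m x1 ltac:(unfold m; lra) Hd1) as [e [He1 He2]].
    assert (0 <= G e) by (apply HG0; unfold m in *; lra).
    assert (0 <= v1 e). { unfold G in *. assert (0 < e^2 - 1) by (unfold m in *; nra).
      apply Rmult_le_reg_l with (e^2-1); auto. lra. }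
    assert (0 < v m) by (apply Hpos; unfold m; lra). unfold m in *. nra. }
  split; auto.
  assert (0 <= G x0) by (apply HG0; lra).
  unfold G in *. assert (0 < x0^2 - 1) by nra.
  apply Rmult_le_reg_l with (x0^2-1); auto. lra.
Qed.

Lemma dsign (v : R -> R) x a d : a < x -> is_derive v x d -> 0 < d -> v x = 0 ->
  exists y, a < y < x /\ v y < 0.
Proof.
  intros Ha Hd Hpos Hv. apply is_derive_Reals in Hd.
  destruct (Hd (d/2) ltac:(lra)) as [del Hdel].
  set (h := - Rmin (del/2) ((x-a)/2)).
  assert (Hh1 : 0 < Rmin (del/2) ((x-a)/2)) by (apply Rmin_pos; pose proof (cond_pos del); lra).
  assert (Hh2 : Rmin (del/2) ((x-a)/2) <= del/2) by apply Rmin_l.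
  assert (Hh3 : Rmin (del/2) ((x-a)/2) <= (x-a)/2) by apply Rmin_r.
  pose proof (cond_pos del).
  assert (h <> 0) by (unfold h; lra).
  assert (Rabs h < del) by (unfold h; rewrite Rabs_left; lra).
  specialize (Hdel h H0 H1). rewrite Hv, Rminus_0_r in Hdel.
  exists (x+h). split. unfold h; lra.
  apply Rabs_lt_between in Hdel. destruct Hdel as [Hl _].
  assert (hneg : h < 0) by (unfold h; lra).
  assert (d/2 < v (x+h) / h) by lra.
  assert (v (x+h) / h * h = v (x+h)) by (field; lra).
  nra.
Qed.

Lemma core2 (c chi x1 : R) (v v1 v2 : R -> R) : 0 < c -> chi > c^2 -> 1 < x1 -> v x1 = 0 ->
  (forall y, 1 < y < x1 -> 0 < v y) -> (forall x, is_derive v x (v1 x)) ->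
  (forall x, is_derive v1 x (v2 x)) ->
  (forall x, (1 - x^2) * v2 x - 2 * x * v1 x + (chi - c^2 * x^2) * v x = 0) ->
  let x0 := sqrt chi / c in
  let r := sqrt ((x1^2 - x0^2)/(x1^2-1)) in
  1 < x0 /\ x0 < x1 /\ 0 < r /\ r < 1 /\ x0 + PI / (2 * (c * r)) < x1.
Proof.
  intros Hc Hchi Hx1 Hv1 Hpos Hd1 Hd2 Hode x0 r.
  destruct (core c chi x1 v v1 v2 Hc Hchi Hx1 Hv1 Hpos Hd1 Hd2 Hode) as [Hlt Hv10].
  fold x0 in Hlt, Hv10.
  assert (Hx0 : 1 < x0).
  { unfold x0. apply Rmult_lt_reg_r with c; auto. unfold Rdiv; rewrite Rmult_assoc, Rinv_l, Rmult_1_r by lra.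
    rewrite Rmult_1_l. rewrite <- (sqrt_pow2 c) by lra. apply sqrt_lt_1; nra. }
  assert (Hx0sq : c^2 * x0^2 = chi).
  { unfold x0. unfold Rdiv. rewrite Rpow_mult_distr, pow2_sqrt by nra. rewrite pow_inv. field. lra. }
  assert (HA : 0 < x1^2 - 1) by nra.
  assert (HB : 0 < x1^2 - x0^2) by nra.
  assert (Hr2 : r^2 * (x1^2-1) = x1^2 - x0^2).
  { unfold r. rewrite pow2_sqrt. field. lra. apply Rlt_le, Rdiv_lt_0_compat; lra. }
  assert (Hr : 0 < r) by (unfold r; apply sqrt_lt_R0, Rdiv_lt_0_compat; lra).
  assert (Hr1 : r < 1). { assert (r^2 < 1). { apply Rmult_lt_reg_r with (x1^2-1). lra. rewrite Hr2. nra. } nra. }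
  do 4 (split; auto).
  set (w := c * r). assert (Hw : 0 < w) by (unfold w; nra).
  destruct (Rlt_or_le (x0 + PI / (2 * w)) x1) as [h|h]; auto. exfalso.
  set (u := fun t => cos (w * (t - x0))).
  set (u1 := fun t => - (w * sin (w * (t - x0)))).
  assert (Hu : forall t : R, is_derive u t (u1 t)).
  { intro t. unfold u, u1. auto_derive; auto. simpl. unfold Rminus. ring. }
  assert (Hu1 : forall t : R, is_derive u1 t (- w^2 * u t)).
  { intro t. unfold u, u1. auto_derive; auto. simpl. unfold Rminus. ring. }
  set (H := fun t => (t^2-1) * (v1 t * u t - v t * u1 t)).
  set (H' := fun t => (chi - c^2 * t^2 + (t^2-1) * w^2) * v t * u t - 2 * t * v t * u1 t).
  assert (HH : forall t : R, is_derive H t (H' t)).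
  { intro t. unfold H, H'. eapply dval.
    apply (dmul (fun t => t^2-1) (fun t => v1 t * u t - v t * u1 t) t (2*t)).
    auto_derive; auto; ring.
    apply dminus; apply dmul; auto.
    change (- (w * sin (w * (t - x0)))) with (u1 t). specialize (Hode t).
    assert (E2: u t * ((1-t^2)*v2 t) = u t * (2*t*v1 t - (chi-c^2*t^2)*v t)) by (f_equal; lra). lra. }
  destruct (mvt H H' x0 x1 Hlt HH) as [e [He1 He2]].
  assert (Hpi : 0 < PI) by apply PI_RGT_0.
  assert (Harg : 0 < w * (e - x0) < PI/2).
  { split. nra. assert (w*(x1-x0) <= PI/2).
    { apply Rmult_le_reg_l with (/w). apply Rinv_0_lt_compat; lra.
      rewrite <- Rmult_assoc, Rinv_l, Rmult_1_l by lra.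
      replace (/ w * (PI/2)) with (PI/(2*w)) by (field; lra). lra. }
    nra. }
  assert (Hue : 0 < u e) by (unfold u; apply cos_gt_0; lra).
  assert (Hse : 0 < sin (w * (e - x0))) by (apply sin_gt_0; lra).
  assert (Hve : 0 < v e) by (apply Hpos; lra).
  assert (Hcoef : 0 <= chi - c^2 * e^2 + (e^2-1) * w^2).
  { assert (EK: (chi - c^2*e^2 + (e^2-1)*w^2)*(x1^2-1) = c^2*(x0^2-1)*(x1^2-e^2)).
    { unfold w. rewrite <- Hx0sq.
      replace ((c^2*x0^2 - c^2*e^2 + (e^2-1)*(c*r)^2)*(x1^2-1)) with
        (c^2*x0^2*(x1^2-1) - c^2*e^2*(x1^2-1) + (e^2-1)*c^2*(r^2*(x1^2-1))) by ring.
      rewrite Hr2. ring. }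
    assert (0 <= c^2*(x0^2-1)*(x1^2-e^2)).
    { apply Rmult_le_pos. apply Rmult_le_pos; nra. nra. }
    destruct (Rle_or_lt 0 (chi - c^2 * e^2 + (e^2-1) * w^2)) as [q|q]; auto. nra. }
  assert (HHe : 0 < H' e).
  { unfold H', u1. assert (0 <= (chi - c^2 * e^2 + (e^2-1) * w^2) * v e * u e).
    { apply Rmult_le_pos; [apply Rmult_le_pos|]; lra. }
    assert (0 < 2 * e * v e * (w * sin (w * (e - x0)))).
    { repeat apply Rmult_lt_0_compat; lra. }
    lra. }
  assert (HH0 : 0 <= H x0).
  { unfold H, u, u1. rewrite Rminus_diag, Rmult_0_r, cos_0, sin_0. replace ((x0 ^ 2 - 1) * (v1 x0 * 1 - v x0 * - (w * 0))) with ((x0^2-1) * v1 x0) by ring. apply Rmult_le_pos; nra. }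
  assert (HH1 : 0 < H x1) by nra.
  assert (Hux1 : 0 <= u x1).
  { unfold u. apply cos_ge_0. nra.
    apply Rmult_le_reg_l with (/w). apply Rinv_0_lt_compat; lra.
    rewrite <- Rmult_assoc, Rinv_l, Rmult_1_l by lra.
    replace (/ w * (PI/2)) with (PI/(2*w)) by (field; lra). lra. }
  assert (Hv1p : 0 < v1 x1).
  { unfold H in HH1. rewrite Hv1 in HH1.
    destruct (Rlt_or_le 0 (v1 x1)) as [q|q]; auto. exfalso.
    assert (v1 x1 * u x1 <= 0) by nra. nra. }
  destruct (dsign v x1 x0 (v1 x1) Hlt (Hd1 x1) Hv1p Hv1) as [y [Hy1 Hy2]].
  assert (0 < v y) by (apply Hpos; lra). lra.
Qed.

Lemma final_arith (c chi x1 : R) : 0 < c -> chi > c^2 ->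
  let x0 := sqrt chi / c in
  let r := sqrt ((x1^2 - x0^2)/(x1^2-1)) in
  1 < x0 /\ x0 < x1 /\ 0 < r /\ r < 1 /\ x0 + PI / (2 * (c * r)) < x1 ->
  x1 - sqrt chi / c > PI / (2 * c) /\
  sqrt ((x1 ^ 2 - 1) / (x1 ^ 2 - chi / c ^ 2)) < 2 / PI * c * (x1 - sqrt chi / c).
Proof.
  intros Hc Hchi x0 r [Hx0 [Hlt [Hr [Hr1 Hm]]]].
  fold x0.
  assert (Hx0sq : chi / c^2 = x0^2).
  { unfold x0. unfold Rdiv. rewrite Rpow_mult_distr, pow2_sqrt by nra. rewrite pow_inv. reflexivity. }
  rewrite Hx0sq.
  assert (Hpi : 0 < PI) by apply PI_RGT_0.
  assert (HA : 0 < x1^2 - 1) by nra.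
  assert (HB : 0 < x1^2 - x0^2) by nra.
  assert (Hk : PI < 2 * (c*r) * (x1 - x0)).
  { assert (PI / (2*(c*r)) * (2*(c*r)) = PI) by (field; nra).
    assert (0 < 2*(c*r)) by nra. nra. }
  split.
  - assert (PI / (2*c) < PI/(2*(c*r))).
    { unfold Rdiv. apply Rmult_lt_compat_l; auto. apply Rinv_lt_contravar; nra. }
    lra.
  - replace ((x1 ^ 2 - 1) / (x1 ^ 2 - x0 ^ 2)) with (/ ((x1^2 - x0^2)/(x1^2-1))) by (field; lra).
    rewrite sqrt_inv. fold r.
    apply Rmult_lt_reg_l with (PI * r). nra.
    replace (PI * r * / r) with PI by (field; lra).
    replace (PI * r * (2 / PI * c * (x1 - x0))) with (2 * (c*r) * (x1 - x0)) by (field; lra).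
    exact Hk.
Qed.

Theorem theorem31 (c : R) (psi : nat -> R -> R) (lam : nat -> C) (chi : nat -> R)
  (n : nat) (x1 : R) :
  0 < c ->
  is_PSWF_family c psi lam ->
  (forall k, 0 < chi k) ->
  (forall k, chi k < chi (S k)) ->
  (forall k, satisfies_prolate_ode c (chi k) (psi k)) ->
  chi n > c ^ 2 ->
  1 < x1 -> psi n x1 = 0 ->
  (forall y, 1 < y < x1 -> psi n y <> 0) ->
  x1 - sqrt (chi n) / c > PI / (2 * c) /\
  sqrt ((x1 ^ 2 - 1) / (x1 ^ 2 - chi n / c ^ 2)) < 2 / PI * c * (x1 - sqrt (chi n) / c).
Proof.
  intros Hc _ _ _ Hode Hchi Hx1 Hz Hnz.
  apply final_arith; auto.
  set (f := psi n). specialize (Hode n). fold f in Hode, Hz, Hnz.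
  set (m := (1 + x1)/2).
  assert (Hfm : f m <> 0) by (apply Hnz; unfold m; lra).
  set (s := if Rlt_dec 0 (f m) then 1 else -1).
  assert (Hs : s <> 0) by (unfold s; destruct Rlt_dec; lra).
  assert (Hsm : 0 < s * f m).
  { unfold s; destruct Rlt_dec; [lra|]. assert (f m < 0) by lra. lra. }
  set (v := fun x => s * f x).
  set (v1 := fun x => s * Derive f x).
  set (v2 := fun x => s * Derive (Derive f) x).
  assert (Hd1 : forall x : R, is_derive v x (v1 x)).
  { intro x. unfold v, v1. apply is_derive_scal. apply Derive_correct. apply (Hode x). }
  assert (Hd2 : forall x : R, is_derive v1 x (v2 x)).
  { intro x. unfold v1, v2. apply is_derive_scal. apply Derive_correct. apply (Hode x). }
  assert (Hcont : continuity v).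
  { intro x. apply continuity_pt_filterlim. apply (ex_derive_continuous v). exists (v1 x). apply Hd1. }
  assert (Hpos : forall y, 1 < y < x1 -> 0 < v y).
  { intros y Hy. destruct (Rlt_or_le 0 (v y)) as [q|q]; auto. exfalso.
    destruct (IVT_gen v y m 0 Hcont) as [z [Hz1 Hz2]].
    { split. apply Rle_trans with (v y); [apply Rmin_l| lra].
      apply Rle_trans with (v m); [unfold v; lra| apply Rmax_r]. }
    assert (1 < Rmin y m) by (apply Rmin_glb_lt; unfold m in *; lra).
    assert (Rmax y m < x1) by (apply Rmax_lub_lt; unfold m in *; lra).
    apply (Hnz z). lra. unfold v in Hz2.
    destruct (Rmult_integral _ _ Hz2); [contradiction|auto]. }
  apply (core2 c (chi n) x1 v v1 v2); auto.
  - unfold v. rewrite Hz. ring.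
  - intro x. destruct (Hode x) as [_ [_ E]]. unfold v, v1, v2. change (Derive_n f 2 x) with (Derive (Derive f) x) in E.
    replace ((1 - x ^ 2) * (s * Derive (Derive f) x) - 2 * x * (s * Derive f x) + (chi n - c ^ 2 * x ^ 2) * (s * f x))
      with (s * ((1 - x ^ 2) * Derive (Derive f) x - 2 * x * Derive f x + (chi n - c ^ 2 * x ^ 2) * f x)) by ring.
    rewrite E. ring.
Qed.
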